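(* For all integers $n,k,i\ge 0$, \[ e_{n,i}^k = \sum_{j=0}^{i} (-1)^j \binom{n+1}{j} (k+i+1-j)^n . \]
   Context: Convention: $0^0=1$. For a fixed integer parameter $k$, the numbers $e^k_{n,i}$ are defined by $e^k_{0,0}=1$, $e^k_{n,i}=0$ whenever $i<0$ or $i>n$, and $e^k_{n,i}=(k+i+1)\,e^k_{n-1,i}+(n-k-i)\,e^k_{n-1,i-1}$ for all other integers $n,i$. *)

(* Defs.v *)
From mathcomp Require Import all_boot all_order all_algebra.
Set Implicit Arguments. Unset Strict Implicit. Unset Printing Implicit Defensive.
Import Order.TTheory GRing.Theory Num.Theory.
Local Open Scope ring_scope.

Fixpoint eKN (k : int) (n : nat) (i : int) : int :=
  match n with
  | 0%N => if i == 0 then 1 else 0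
  | n'.+1 =>
      if (i < 0) || (n%:Z < i) then 0
      else (k + i + 1) * eKN k n' i + (n%:Z - k - i) * eKN k n' (i - 1)
  end.

(* Main.v *)
Require Import Defs.
From mathcomp Require Import all_boot all_order all_algebra.
From mathcomp Require Import ring.
Import Order.TTheory GRing.Theory Num.Theory.
Local Open Scope ring_scope.

Definition fS (k n i : nat) : int :=
  \sum_(0 <= j < i.+1) (-1) ^+ j * ('C(n.+1, j))%:Z
                         * (k%:Z + i%:Z + 1 - j%:Z) ^+ n.

Lemma pt (k n i j : nat) :
  (-1) ^+ j.+1 * ('C(n.+2, j.+1))%:Z * (k%:Z + (i.+1)%:Z + 1 - (j.+1)%:Z) ^+ n.+1
  = (k%:Z + (i.+1)%:Z + 1) * ((-1) ^+ j.+1 * ('C(n.+1, j.+1))%:Z * (k%:Z + (i.+1)%:Z + 1 - (j.+1)%:Z) ^+ n)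
    + ((n.+1)%:Z - k%:Z - (i.+1)%:Z) * ((-1) ^+ j * ('C(n.+1, j))%:Z * (k%:Z + i%:Z + 1 - j%:Z) ^+ n).
Proof.
have H := mul_bin_diag n.+2 j; simpl in H.
have HZ : ((j.+1)%:Z * ('C(n.+1, j.+1)%:Z + 'C(n.+1, j)%:Z) = (n.+2)%:Z * 'C(n.+1, j)%:Z).
  by rewrite -!PoszD -!PoszM -binS H.
rewrite binS PoszD.
have E : k%:Z + (i.+1)%:Z + 1 - (j.+1)%:Z = k%:Z + i%:Z + 1 - j%:Z by ring.
rewrite E.
apply/eqP; rewrite -subr_eq0; apply/eqP.
transitivity ((-1) ^+ j * (k%:Z + i%:Z + 1 - j%:Z) ^+ n *
   ((j.+1)%:Z * ('C(n.+1, j.+1)%:Z + 'C(n.+1, j)%:Z) - (n.+2)%:Z * 'C(n.+1, j)%:Z)).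
  rewrite !exprS; ring.
by rewrite HZ subrr mulr0.
Qed.

Lemma recS (k n i : nat) :
  fS k n.+1 i.+1 = (k%:Z + (i.+1)%:Z + 1) * fS k n i.+1
                   + ((n.+1)%:Z - k%:Z - (i.+1)%:Z) * fS k n i.
Proof.
rewrite /fS big_nat_recl // [in RHS]big_nat_recl //.
rewrite mulrDr !big_distrr /= -[RHS]addrA -big_split /=.
congr (_ + _); first by rewrite !bin0 !expr0 exprS; ring.
by apply: eq_bigr => j _; rewrite pt.
Qed.

Lemma rec0 (k n : nat) : fS k n.+1 0 = (k%:Z + 0%:Z + 1) * fS k n 0.
Proof. rewrite /fS !big_nat1 !bin0 !expr0 exprS; ring. Qed.

Lemma vanish (k n i : nat) : (n < i)%N -> fS k n i = 0.
Proof.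
elim: n i => [|n IH] [|i] //= Hi.
  rewrite /fS big_nat_recl // big_nat_recl // big1 => [|j _]; last by rewrite bin_small // mulr0 mul0r.
  rewrite bin0 bin1; ring.
rewrite recS (IH i.+1) ?(IH i) // ?mulr0 ?addr0 //.
by apply: ltnW.
Qed.

Lemma eKN_neg (k : int) n : eKN k n (-1) = 0.
Proof. by case: n. Qed.

Lemma mainF (n k i : nat) : eKN k%:Z n i%:Z = fS k n i.
Proof.
elim: n i => [|n IH] i.
  case: i => [|i] /=; first by rewrite /fS big_nat1 bin0 !expr0 mulr1.
  by rewrite vanish.
rewrite /=.
case: (ltnP n.+1 i) => Hi.
  have -> : ((n.+1)%:Z < i%:Z) = true by rewrite ltz_nat.
  by rewrite vanish.
have -> : ((n.+1)%:Z < i%:Z) = false by rewrite ltz_nat ltnNge Hi.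
case: i Hi => [|i] Hi /=.
  by rewrite eKN_neg mulr0 addr0 IH rec0.
have -> : (i.+1)%:Z - 1 = i%:Z by rewrite -addn1 PoszD addrK.
by rewrite !IH recS.
Qed.

Theorem corollary2p3 (n k i : nat) :
  eKN k%:Z n i%:Z =
  \sum_(0 <= j < i.+1) (-1) ^+ j * ('C(n.+1, j))%:Z
                         * (k%:Z + i%:Z + 1 - j%:Z) ^+ n.
Proof. exact: mainF. Qed.
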